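(* Let $\mathbb{K}$ be a field, $G=\operatorname{SL}_2(\mathbb{K})$, and $V$ a $G$-module of length $n$. Then the subgroup $\langle G\cdot (Z_1(V) \cap w\cdot Z_{n-1}(V))\rangle$ of $V$ generated by the $G$-translates of $Z_1(V) \cap w\cdot Z_{n-1}(V)$ has length at most $n-1$ (indeed it is contained in $Z_{n-1}(V)$).
   Context: $G = \operatorname{SL}_2(\mathbb{K})$ is regarded as an abstract group and a $G$-module is a $\mathbb{Z}[G]$-module. Let $w = \begin{pmatrix}0 & 1 \\ -1 & 0 \end{pmatrix}$ and $U = \left\{\begin{pmatrix}1 & \lambda \\ 0 & 1\end{pmatrix}:\lambda\in\mathbb{K}\right\}$. For a $G$-module $V$ set $Z_0(V) = 0$ and define $Z_{k+1}(V)$ by $Z_{k+1}(V)/Z_k(V) = C_{V/Z_k(V)}(U)$ (the fixed points of $U$ in the quotient). The length of $V$ (or of a $U$-invariant subgroup) is the least $k$ with $Z_k = $ the whole module, i.e. the least $k$ such that $k$-fold iterated commutators with $U$ vanish. *)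

(* Defs.v *)
From HB Require Import structures.
From mathcomp Require Import all_boot all_order all_algebra.
Set Implicit Arguments. Unset Strict Implicit. Unset Printing Implicit Defensive.
Import GRing.Theory.
Local Open Scope ring_scope.

Definition inSL2 (K : fieldType) (g : 'M[K]_2) : bool := \det g == 1.

(* A G-module: an abelian group V (zmodType) with an action of SL_2(K)
   by group endomorphisms (values of act outside SL_2 are irrelevant). *)
Definition is_SL2_module (K : fieldType) (V : zmodType)
  (act : 'M[K]_2 -> V -> V) : Prop :=
  [/\ (forall g, inSL2 g -> forall x y, act g (x - y) = act g x - act g y),
      (forall v, act 1%:M v = v)
    & (forall g h, inSL2 g -> inSL2 h -> forall v,
          act (g *m h) v = act g (act h v))].

Definition wmx (K : fieldType) : 'M[K]_2 :=
  delta_mx 0 1 - delta_mx 1 0.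
Definition umx (K : fieldType) (l : K) : 'M[K]_2 :=
  1%:M + l *: delta_mx 0 1.

(* Z_k(V): Z_0 = 0 and v \in Z_{k+1} iff v + Z_k is U-fixed in V/Z_k,
   i.e. u v - v \in Z_k for all u \in U. *)
Fixpoint Zk (K : fieldType) (V : zmodType) (act : 'M[K]_2 -> V -> V)
  (k : nat) (v : V) : Prop :=
  match k with
  | 0 => v = 0
  | k'.+1 => forall l : K, Zk act k' (act (umx l) v - v)
  end.

Definition has_length (K : fieldType) (V : zmodType)
  (act : 'M[K]_2 -> V -> V) (n : nat) : Prop :=
  (forall v, Zk act n v) /\
  (forall k, (forall v, Zk act k v) -> (n <= k)%N).

Inductive gen_subgroup (V : zmodType) (S : V -> Prop) : V -> Prop :=
  | gen_in : forall x, S x -> gen_subgroup S x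
  | gen_0 : gen_subgroup S 0
  | gen_sub : forall x y, gen_subgroup S x -> gen_subgroup S y ->
              gen_subgroup S (x - y).

Definition G_translates (K : fieldType) (V : zmodType)
  (act : 'M[K]_2 -> V -> V) (S : V -> Prop) : V -> Prop :=
  fun v => exists g x, inSL2 g /\ S x /\ v = act g x.

(* Length of a U-invariant subgroup W is at most k iff its k-fold iterated
   commutators with U vanish, i.e. every element of W lies in Z_k(V). *)
Definition length_le (K : fieldType) (V : zmodType)
  (act : 'M[K]_2 -> V -> V) (W : V -> Prop) (k : nat) : Prop :=
  forall v, W v -> Zk act k v.

(* Main.v *)
Require Import Defs.
From mathcomp Require Import all_boot all_order all_algebra ring.
Set Implicit Arguments. Unset Strict Implicit.
Import GRing.Theory.
Local Open Scope ring_scope.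
Lemma det2 (K : fieldType) (A : 'M[K]_2) : \det A = A 0 0 * A 1 1 - A 0 1 * A 1 0.
Proof.
rewrite (expand_det_row _ 0) !big_ord_recl big_ord0 /cofactor !det_mx11 !mxE /=.
rewrite !addr0 expr0 expr1 mul1r mulN1r mulrN.
have -> : lift 0 0 = 1 :> 'I_2 by apply/val_inj.
have -> : lift 1 0 = 0 :> 'I_2 by apply/val_inj.
by [].
Qed.
Lemma mulmx2 (K : fieldType) (A B : 'M[K]_2) i j : (A *m B) i j = A i 0 * B 0 j + A i 1 * B 1 j.
Proof. rewrite mxE !big_ord_recl big_ord0 addr0. have -> : lift ord0 ord0 = 1 :> 'I_2 by apply/val_inj. by []. Qed.
Lemma mx2_eq (K : fieldType) (A B : 'M[K]_2) : A 0 0 = B 0 0 -> A 0 1 = B 0 1 -> A 1 0 = B 1 0 -> A 1 1 = B 1 1 -> A = B.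
Proof.
move=> h00 h01 h10 h11; apply/matrixP => i j.
have E : forall i : 'I_2, i = 0 \/ i = 1.
  by case=> [[|[|k]]] H //; [left|right]; apply/val_inj.
by case: (E i) => ->; case: (E j) => ->.
Qed.
Lemma subACA (V : zmodType) (a b x y : V) : (a - b) - (x - y) = (a - x) - (b - y).
Proof. by rewrite !opprB addrACA [- b + _]addrC -addrACA addrC. Qed.

Lemma det_umx (K : fieldType) l : \det (umx l) = 1 :> K.
Proof. by rewrite det2 /umx !mxE /=; ring. Qed.
Lemma det_wmx (K : fieldType) : \det (wmx K) = 1.
Proof. by rewrite det2 /wmx !mxE /=; ring. Qed.

Section S.
Lemma act0 (K : fieldType) (V : zmodType) (act : 'M[K]_2 -> V -> V) g :
  is_SL2_module act -> inSL2 g -> act g 0 = 0.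
Proof. by case=> hB _ _ hg; have := hB g hg 0 0; rewrite !subrr. Qed.
End S.
Lemma conjB (K : fieldType) (b : 'M[K]_2) l : inSL2 b -> b 1 0 = 0 ->
  umx l *m b = b *m umx (l * b 1 1 ^+ 2).
Proof.
rewrite /inSL2 det2 => /eqP hd h10; rewrite h10 mulr0 subr0 in hd.
apply: mx2_eq; rewrite !mulmx2 /umx !mxE /= ?h10.
all: try ring.
rewrite (_ : b 0 0 * (0 + l * b 1 1 ^+ 2 * 1) = (b 0 0 * b 1 1) * (l * b 1 1)); last by ring.
rewrite hd; ring.
Qed.
Lemma umxSL (K : fieldType) l : inSL2 (umx l : 'M[K]_2).
Proof. by rewrite /inSL2 det_umx. Qed.
Lemma wmxSL (K : fieldType) : inSL2 (wmx K).
Proof. by rewrite /inSL2 det_wmx. Qed.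

Lemma Zk0 (K : fieldType) (V : zmodType) (act : 'M[K]_2 -> V -> V) k :
  is_SL2_module act -> Zk act k 0.
Proof.
move=> hM; elim: k => [|k IH] //= l.
by rewrite (act0 hM (umxSL l)) subrr.
Qed.

Lemma Zk_sub (K : fieldType) (V : zmodType) (act : 'M[K]_2 -> V -> V) k x y :
  is_SL2_module act -> Zk act k x -> Zk act k y -> Zk act k (x - y).
Proof.
move=> hM; elim: k x y => [|k IH] x y /=; first by move=> -> ->; rewrite subrr.
move=> hx hy l; case: (hM) => hB _ _.
by rewrite hB ?umxSL // subACA; apply: IH.
Qed.

Lemma Zk_S (K : fieldType) (V : zmodType) (act : 'M[K]_2 -> V -> V) k x :
  is_SL2_module act -> Zk act k x -> Zk act k.+1 x.
Proof.
move=> hM; elim: k x => [|k IH] x /=.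
  by move=> -> l; rewrite (act0 hM (umxSL l)) subrr.
by move=> h l; apply: IH.
Qed.

Lemma Zk_le (K : fieldType) (V : zmodType) (act : 'M[K]_2 -> V -> V) i j x :
  is_SL2_module act -> (i <= j)%N -> Zk act i x -> Zk act j x.
Proof.
move=> hM; elim: j => [|j IH].
  by rewrite leqn0 => /eqP ->.
rewrite leq_eqVlt => /orP [/eqP -> //|hij] hx.
by apply: Zk_S => //; apply: IH.
Qed.

Lemma Zk_B (K : fieldType) (V : zmodType) (act : 'M[K]_2 -> V -> V) k b y :
  is_SL2_module act -> inSL2 b -> b 1 0 = 0 -> Zk act k y -> Zk act k (act b y).
Proof.
move=> hM hb h10; case: (hM) => hB h1 hC.
elim: k y => [|k IH] y /=; first by move=> ->; rewrite (act0 hM hb).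
move=> hy l.
rewrite -hC ?umxSL // (conjB l hb h10) hC ?umxSL // -hB //.
by apply: IH.
Qed.
Lemma umxN (K : fieldType) (m : K) : umx (- m) *m umx m = 1%:M.
Proof. by apply: mx2_eq; rewrite !mulmx2 /umx !mxE /=; ring. Qed.

Theorem mainTheorem8 (K : fieldType) (V : zmodType)
  (act : 'M[K]_2 -> V -> V) (n : nat) :
  is_SL2_module act -> has_length act n ->
  let S := fun v : V => Zk act 1 v /\
             exists z, Zk act n.-1 z /\ v = act (wmx K) z in
  let W := gen_subgroup (G_translates act S) in
  length_le act W n.-1 /\ (forall v, W v -> Zk act n.-1 v).
Proof.
move=> hM [hall hmin] S W.
suff H : forall v, W v -> Zk act n.-1 v by split.
move=> v; elim => [x [g [y [hg [[hy1 [z [hz ey]]] ->]]]] | | x y _ hx _ hy]; last 2 first.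
- exact: Zk0.
- exact: Zk_sub.
- subst y.
- case: n hall hmin hz {S W} => [|k] hall _ hz /=; first exact: hall.
  case: k hall hz => [|k] hall hz /=.
    by rewrite /= in hz; rewrite hz (act0 hM (wmxSL K)) (act0 hM hg).
  have hx : Zk act k.+1 (act (wmx K) z) by exact: (Zk_le hM (isT : (1 <= k.+1)%N) hy1).
  case: (hM) => hB h1 hC.
  case: (eqVneq (g 1 0) 0) => hc; first exact: (Zk_B hM hg hc hx).
  set m := g 1 1 / g 1 0.
  have eg : g = (g *m umx (- m)) *m umx m by rewrite -mulmxA umxN mulmx1.
  have hu : act (umx m) (act (wmx K) z) = act (wmx K) z.
    by apply: subr0_eq; apply: hy1.
  have hg' : inSL2 (g *m umx (- m)).
    by move: hg; rewrite /inSL2 detM det_umx mulr1.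
  rewrite eg hC ?umxSL // hu -hC ?wmxSL //.
  have hgw : inSL2 (g *m umx (- m) *m wmx K).
    by rewrite /inSL2 !detM det_umx det_wmx !mulr1; exact: hg.
  have h10 : (g *m umx (- m) *m wmx K) 1 0 = 0.
    rewrite !mulmx2 /umx /wmx !mxE /= /m.
    field.
    exact: hc.
  exact: (Zk_B hM hgw h10 hz).
Qed.
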